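(* Every light confluent epimorphism between rooted trees is a composition of elementary light confluent epimorphisms.
   Context: A graph is a pair $(V,E)$ with $E\subseteq V^2$ reflexive and symmetric; a tree is a finite graph in which any two distinct vertices are joined by a unique sequence of pairwise distinct vertices with consecutive ones adjacent. A rooted tree is a tree with a distinguished root $r$; $x\le y$ iff the path from $r$ to $y$ contains $x$. Epimorphisms between rooted trees: vertex maps sending edges to edges, surjective on vertices and edges, root to root, order-preserving. Connected sets: not a union of two nonempty disjoint sets with no edges between; components are maximal connected subsets; for a vertex $v$, $G\setminus\{v\}$ denotes the induced subgraph on the remaining vertices. Confluent: for each connected $Q$ of the target, every component $K$ of $f^{-1}(Q)$ has $f(K)=Q$. Light: distinct vertices with the same image are never adjacent. An epimorphism $f\colon G\to H$ between rooted trees is elementary light confluent if there are a vertex $v\in G$ and two distinct components $C_1,C_2$ of $G\setminus\{v\}$ such that $f|_{C_1}$ and $f|_{C_2}$ are injective, $f(C_1)=f(C_2)$ is a component of $H\setminus\{f(v)\}$, and $f$ restricted to $G\setminus(C_1\cup C_2)$ is injective. *)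

(* Defs.v *)
From mathcomp Require Import all_boot.
Set Implicit Arguments. Unset Strict Implicit. Unset Printing Implicit Defensive.

Definition is_gpath (V : finType) (E : rel V) (x y : V) (s : seq V) : Prop :=
  exists p, s = x :: p /\ path E x p /\ last x p = y /\ uniq s.

Record rtree : Type := RTree {
  vtx :> finType;
  adj : rel vtx;
  root : vtx;
  adj_refl : forall x, adj x x;
  adj_sym : forall x y, adj x y = adj y x;
  tree_ax : forall x y, x <> y ->
    (exists s, is_gpath adj x y s) /\
    (forall s1 s2, is_gpath adj x y s1 -> is_gpath adj x y s2 -> s1 = s2)
}.

Definition tle (T : rtree) (x y : T) : Prop :=
  exists s, is_gpath (@adj T) (root T) y s /\ x \in s.

Definition epimorphism (G H : rtree) (f : G -> H) : Prop :=
  [/\ (forall x y, adj x y -> adj (f x) (f y)),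
      (forall w : H, exists v : G, f v = w),
      (forall a b : H, adj a b -> exists x y : G, [/\ adj x y, f x = a & f y = b]),
      f (root G) = root H
    & (forall x y : G, tle x y -> tle (f x) (f y))].

Definition connected (T : rtree) (A : {set T}) : Prop :=
  ~ exists B C : {set T},
      [/\ B != set0, C != set0, [disjoint B & C], A = B :|: C
        & forall b c, b \in B -> c \in C -> ~~ adj b c].

Definition component (T : rtree) (A K : {set T}) : Prop :=
  [/\ K \subset A, connected K
    & forall K' : {set T}, K \subset K' -> K' \subset A -> connected K' -> K' = K].

Definition confluent (G H : rtree) (f : G -> H) : Prop :=
  forall Q : {set H}, connected Q ->
    forall K : {set G}, component (f @^-1: Q) K -> f @: K = Q.

Definition light (G H : rtree) (f : G -> H) : Prop :=
  forall x y : G, x <> y -> f x = f y -> ~~ adj x y.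

(* Components of G \ {v}: connectedness of a vertex set only depends on the
   edges among its vertices, so components of the induced subgraph on
   V \ {v} are the components of the set [set~ v]. *)
Definition elementary_lc (G H : rtree) (f : G -> H) : Prop :=
  epimorphism f /\
  exists (v : G) (C1 C2 : {set G}),
    component [set~ v] C1 /\ component [set~ v] C2 /\ C1 <> C2 /\
    {in C1 &, injective f} /\ {in C2 &, injective f} /\
    f @: C1 = f @: C2 /\ component [set~ f v] (f @: C1) /\
    {in ~: (C1 :|: C2) &, injective f}.

Inductive elem_comp : forall G H : rtree, (G -> H) -> Prop :=
  | ec_one (G H : rtree) (f : G -> H) : elementary_lc f -> elem_comp f
  | ec_step (G K H : rtree) (f : G -> K) (g : K -> H) (h : G -> H) :
      elementary_lc f -> elem_comp g -> (forall x, h x = g (f x)) -> elem_comp h.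

(* Main.v *)
Require Import Defs.
From mathcomp Require Import all_boot.
Require Import Defs.
Set Implicit Arguments. Unset Strict Implicit. Unset Printing Implicit Defensive.

Section Tree.
Variable T : rtree.

Definition gp (x y : T) (s : seq T) : bool :=
  [&& s == x :: behead s, path (@adj T) x (behead s), last x (behead s) == y & uniq s].

Lemma gpP x y s : reflect (is_gpath (@adj T) x y s) (gp x y s).
Proof.
apply: (iffP idP).
  case/and4P=> /eqP Es H1 /eqP H2 H3; exists (behead s); split => //.
case=> p [-> [H1 [H2 H3]]]; apply/and4P; split => //; exact/eqP.
Qed.

Lemma gp_uniq x y s1 s2 : gp x y s1 -> gp x y s2 -> s1 = s2.
Proof.
case: (eqVneq x y) => [<-|nxy].
  move=> /and4P[/eqP e1 _ /eqP l1 u1] /and4P[/eqP e2 _ /eqP l2 u2].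
  rewrite e1 e2; congr (_ :: _).
  move: u1 u2 l1 l2; rewrite e1 e2 /=.
  case: (behead s1) => [|a p1]; case: (behead s2) => [|b p2] //=.
  - by move=> _ /andP[] /negP H _ _ E; case: H; rewrite -E mem_last.
  - by move=> /andP[] /negP H _ _ E; case: H; rewrite -E mem_last.
  - by move=> /andP[] /negP H _ _ E; case: H; rewrite -E mem_last.
move=> /gpP H1 /gpP H2; have [_ U] := tree_ax (elimN eqP nxy); exact: U.
Qed.

Lemma gp_ex x : exists s, gp (root T) x s.
Proof.
case: (eqVneq (root T) x) => [<-|nx].
  by exists [:: root T]; rewrite /gp /= !eqxx.
have [[s /gpP Hs] _] := tree_ax (elimN eqP nx); by exists s.
Qed.

Definition rp (x : T) : seq T := xchoose (gp_ex x).
Lemma rpP x : gp (root T) x (rp x).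
Proof. exact: xchooseP. Qed.
Lemma rpE x s : gp (root T) x s -> rp x = s.
Proof. move=> H; exact: gp_uniq (rpP x) H. Qed.

Lemma rp_root : rp (root T) = [:: root T].
Proof. by apply: rpE; rewrite /gp /= !eqxx. Qed.

Definition par (x : T) : T := last (root T) (belast (root T) (behead (rp x))).
Definition depth (x : T) : nat := (size (rp x)).-1.

Lemma par_root : par (root T) = root T.
Proof. by rewrite /par rp_root. Qed.

Lemma rp_par x : x != root T -> rp x = rcons (rp (par x)) x.
Proof.
move=> nx; have /and4P[/eqP e1 pa /eqP la un] := rpP x.
move: e1 pa la un; rewrite /par; case/lastP: (behead (rp x)) => [|p y] e1.
  by move=> _ /= E; rewrite E eqxx in nx.
rewrite last_rcons => pa ly; rewrite ly in e1 pa.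
rewrite belast_rcons /= => un.
have g : gp (root T) (last (root T) p) (root T :: p).
  rewrite e1 -rcons_cons rcons_uniq in un; case/andP: un => _ un.
  apply/and4P; split => //; move: pa; rewrite rcons_path => /andP[-> _] //.
by rewrite (rpE g) e1.
Qed.

Lemma rp_head x : exists p, rp x = root T :: p.
Proof. have /and4P[/eqP e _ _ _] := rpP x; by exists (behead (rp x)). Qed.

Lemma rp_last x : last (root T) (behead (rp x)) = x.
Proof. by have /and4P[_ _ /eqP -> _] := rpP x. Qed.

Lemma rp_uniq x : uniq (rp x).
Proof. by have /and4P[_ _ _ ->] := rpP x. Qed.

Lemma mem_rp x : x \in rp x.
Proof.
case: (eqVneq x (root T)) => [->|nx]; first by rewrite rp_root mem_head.
by rewrite rp_par // mem_rcons mem_head.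
Qed.

Lemma par_neq x : x != root T -> par x != x.
Proof.
move=> nx; apply/negP => /eqP E; have := rp_uniq x.
by rewrite rp_par // rcons_uniq -{1}E mem_rp.
Qed.

Lemma par_eq x : (par x == x) = (x == root T).
Proof.
case: (eqVneq x (root T)) => [->|nx]; first by rewrite par_root eqxx.
exact/negbTE/par_neq.
Qed.

Lemma depth_par x : x != root T -> depth x = (depth (par x)).+1.
Proof.
move=> nx; rewrite /depth rp_par // size_rcons /=.
by case: (rp_head (par x)) => p ->.
Qed.

Lemma depth_root : depth (root T) = 0.
Proof. by rewrite /depth rp_root. Qed.

Lemma depth0 x : (depth x == 0) = (x == root T).
Proof.
case: (eqVneq x (root T)) => [->|nx]; first by rewrite depth_root.
by rewrite depth_par.
Qed.

Lemma adj_par x : adj x (par x).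
Proof.
case: (eqVneq x (root T)) => [->|nx]; first by rewrite par_root adj_refl.
have /and4P[_ pa _ _] := rpP x; move: pa.
case: (rp_head (par x)) => p Ep.
rewrite rp_par // Ep /= rcons_path => /andP[_].
by move=> H; rewrite -(rp_last (par x)) Ep /= adj_sym.
Qed.

Lemma rp_ind (P : T -> Prop) : P (root T) -> (forall x, x != root T -> P (par x) -> P x) ->
  forall x, P x.
Proof.
move=> H0 HS x; move: {2}(depth x) (erefl (depth x)) => n; elim: n x => [|n IH] x Hd.
  by move/eqP: Hd; rewrite depth0 => /eqP ->.
have nx : x != root T by rewrite -depth0 Hd.
apply: (HS _ nx); apply: IH; move: Hd; rewrite (depth_par nx); by case.
Qed.

Lemma mem_rp_par x y : x \in rp y = (x == y) || ((y != root T) && (x \in rp (par y))).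
Proof.
case: (eqVneq y (root T)) => [->|ny]; first by rewrite rp_root inE /= orbF.
by rewrite rp_par // mem_rcons inE /=.
Qed.

Lemma root_rp x : root T \in rp x.
Proof. by case: (rp_head x) => p ->; rewrite mem_head. Qed.

Lemma rp_trans x y z : x \in rp y -> y \in rp z -> x \in rp z.
Proof.
move=> Hxy; elim/rp_ind: z => [|z nz IH] /=.
  by rewrite rp_root inE => /eqP E; move: Hxy; rewrite E rp_root.
rewrite (mem_rp_par y) nz /= => /orP[/eqP <- //|/IH].
by move=> H; rewrite mem_rp_par nz H orbT.
Qed.

Lemma depth_rp x y : x \in rp y -> depth x <= depth y ?= iff (x == y).
Proof.
elim/rp_ind: y => [|y ny IH] /=.
  by rewrite rp_root inE => /eqP ->; rewrite eqxx; split; rewrite ?eqxx ?leqnn.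
rewrite mem_rp_par ny /=; case: (eqVneq x y) => [->|nxy] /=.
  by split; rewrite ?eqxx ?leqnn.
move=> /IH [H1 _].
have lt : depth x < depth y by rewrite (depth_par ny) ltnS H1.
by split; [exact: ltnW | apply/negbTE; rewrite neq_ltn lt].
Qed.

Lemma rp_depth_eq x y : x \in rp y -> depth x = depth y -> x = y.
Proof. by move=> /depth_rp [_ E] D; apply/eqP; rewrite -E D eqxx. Qed.

Lemma rp_inj : injective rp.
Proof. by move=> a b E; rewrite -(rp_last a) -(rp_last b) E. Qed.

Lemma adjP x y : adj x y -> [\/ x = y, par x = y | par y = x].
Proof.
move=> a; case: (eqVneq x y) => [|nxy]; first by constructor 1.
case: (boolP (y \in rp x)) => yx.
  case: (eqVneq x (root T)) => [xr|nx].
    by move: yx; rewrite xr rp_root inE => /eqP E; rewrite E xr eqxx in nxy.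
  have xy : x \notin rp y.
    apply/negP => xy; have /depth_rp[H _] := yx; have /depth_rp[H' _] := xy.
    by move/eqP: nxy; apply; apply/eqP; rewrite -(rp_depth_eq xy) ?eqxx //; apply/eqP; rewrite eqn_leq H H'.
  have g : gp (root T) x (rcons (rp y) x).
    case: (rp_head y) => p Ep; have /and4P[_ pa la un] := rpP y.
    rewrite Ep /= in pa la un.
    rewrite /gp Ep /= eqxx rcons_path last_rcons eqxx pa /= rcons_uniq.
    move: xy un; rewrite Ep inE negb_or => /andP[_ xp] /andP[rp' up].
    by rewrite mem_rcons inE negb_or (eqP la) adj_sym a xp rp' up eq_sym nx.
  constructor 2; have := rpE g; rewrite rp_par // => /eqP.
  by rewrite eqseq_rcons eqxx andbT => /eqP /rp_inj.
have ny : y != root T by apply: contraNneq yx => ->; rewrite root_rp.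
have g : gp (root T) y (rcons (rp x) y).
  case: (rp_head x) => p Ep; have /and4P[_ pa la un] := rpP x.
  rewrite Ep /= in pa la un.
  rewrite /gp Ep /= eqxx rcons_path last_rcons eqxx pa /= rcons_uniq.
  move: yx un; rewrite Ep inE negb_or => /andP[_ xp] /andP[rp' up].
  by rewrite mem_rcons inE negb_or (eqP la) a xp rp' up eq_sym ny.
constructor 3; have := rpE g; rewrite rp_par // => /eqP.
by rewrite eqseq_rcons eqxx andbT => /eqP /rp_inj.
Qed.


Lemma adj_parl x : adj (par x) x.
Proof. by rewrite adj_sym adj_par. Qed.

Lemma adjE x y : adj x y = [|| x == y, par x == y | par y == x].
Proof.
apply/idP/idP; first by case/adjP => ->; rewrite eqxx ?orbT.
by case/or3P => /eqP <-; rewrite ?adj_refl ?adj_par ?adj_parl.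
Qed.

Lemma tleE x y : tle x y <-> x \in rp y.
Proof.
split; first by case=> s [/gpP g xs]; rewrite (rpE g).
by move=> H; exists (rp y); split => //; apply/gpP; exact: rpP.
Qed.

Definition desc (u : T) : {set T} := [set y | u \in rp y].

Lemma desc_self u : u \in desc u.
Proof. by rewrite inE mem_rp. Qed.

Lemma desc_par u y : y \in desc u -> y != u -> (y != root T) /\ (par y \in desc u).
Proof.
rewrite !inE mem_rp_par => /orP[/eqP -> |/andP[-> ->]] //; by rewrite eqxx.
Qed.

Lemma desc_child u w : w != root T -> par w \in desc u -> w \in desc u.
Proof. by move=> nw; rewrite !inE (mem_rp_par u w) nw => ->; rewrite orbT. Qed.

Lemma desc_root_n u y : u != root T -> y \in desc u -> y != root T.
Proof. by move=> nu; rewrite inE; apply: contraTneq => ->; rewrite rp_root inE. Qed.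

Lemma conn_top (r : T) (S : {set T}) : r \in S ->
  (forall s, s \in S -> s != r -> (s != root T) /\ (par s \in S)) -> connected S.
Proof.
move=> rS HS.
have key : forall B C : {set T}, r \in B -> C != set0 -> [disjoint B & C] -> S = B :|: C ->
   (forall b c, b \in B -> c \in C -> ~~ adj b c) -> False.
  move=> B C rB /set0Pn[c0 c0C] dBC SE nE.
  case: (@arg_minnP _ c0 (fun x => x \in C) depth c0C) => c /= cC cmin.
  have cS : c \in S by rewrite SE inE cC orbT.
  have ncr : c != r by apply/eqP => E; move: cC; rewrite E (disjointFr dBC rB).
  have [nc pS] := HS c cS ncr.
  move: pS; rewrite SE inE => /orP[pB|pC].
    by have := nE _ _ pB cC; rewrite adj_parl.
  by have := cmin _ pC; rewrite (depth_par nc) ltnn.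
case=> B [C [nB nC dBC SE nE]].
have : r \in B :|: C by rewrite -SE.
rewrite inE => /orP[rB|rC]; first exact: (key B C).
apply: (key C B) => //; first by rewrite disjoint_sym.
  by rewrite setUC.
by move=> b c bC cB; rewrite adj_sym; apply: nE.
Qed.

Lemma comp_closed (A S : {set T}) (x : T) : x \in S -> S \subset A -> connected S ->
  (forall s w, s \in S -> w \in A -> adj s w -> w \in S) -> component A S.
Proof.
move=> xS SA cS cl; split => // K' SK KA cK.
apply/eqP; rewrite eqEsubset SK andbT; apply/negPn/negP => nsub.
apply: cK; exists S, (K' :\: S); split.
- by apply/set0Pn; exists x.
- by apply/set0Pn; move/subsetPn: nsub => [y yK yS]; exists y; rewrite inE yS.
- by rewrite disjoint_sym disjoints_subset setDE subsetIr.
- apply/setP => y; rewrite !inE; case: (boolP (y \in S)) => yS //=; exact: (subsetP SK).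
- move=> b c bS; rewrite inE => /andP[cnS cK']; apply/negP => a.
  by move: cnS; rewrite (cl b c bS (subsetP KA _ cK') a).
Qed.

Lemma par_desc_n u : u != root T -> par u \notin desc u.
Proof.
move=> nu; rewrite inE; apply/negP => /depth_rp [H _].
by move: H; rewrite (depth_par nu) ltnn.
Qed.

Lemma desc_comp u : u != root T -> component [set~ par u] (desc u).
Proof.
move=> nu; apply: (comp_closed (desc_self u)).
- apply/subsetP => y yd; rewrite !inE; apply: contraTneq yd => ->; exact: par_desc_n.
- apply: (conn_top (desc_self u)) => s sd ns; exact: desc_par.
move=> s w sd; rewrite in_setC1 => nw /adjP [<- //|E|E].
  case: (eqVneq s u) => [Esu|nsu]; first by move: nw; rewrite -E Esu eqxx.
  by rewrite -E; have [_] := desc_par sd nsu; rewrite inE.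
have nwr : w != root T.
  by apply/eqP => wr; move: (desc_root_n nu sd); rewrite -E wr par_root eqxx.
by apply: (desc_child nwr); rewrite E.
Qed.

Lemma rp_same_depth w a b : a \in rp w -> b \in rp w -> depth a = depth b -> a = b.
Proof.
elim/rp_ind: w => [|w nw IH] /=.
  by rewrite rp_root !inE => /eqP -> /eqP ->.
rewrite !(mem_rp_par _ w) nw /= => /orP[/eqP ->|ha] /orP[/eqP ->|hb] // D.
- have [d _] := depth_rp hb; move: d; rewrite -D (depth_par nw) ltnn //.
- have [d _] := depth_rp ha; move: d; rewrite D (depth_par nw) ltnn //.
- exact: IH.
Qed.

Lemma desc_disj c1 c2 w : c1 != c2 -> depth c1 = depth c2 -> w \in desc c1 -> w \notin desc c2.
Proof.
move=> n12 D; rewrite !inE => h1; apply/negP => h2.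
by move/eqP: n12; apply; apply: (rp_same_depth h1 h2).
Qed.

Lemma depth_sib c1 c2 : c1 != root T -> c2 != root T -> par c1 = par c2 -> depth c1 = depth c2.
Proof. by move=> n1 n2 E; rewrite (depth_par n1) (depth_par n2) E. Qed.

End Tree.

Section Morph.
Variables (G H : rtree) (F : G -> H).
Hypothesis pc : forall x, F (par x) = par (F x).
Hypothesis nr : forall x, x != root G -> F x != root H.

Lemma F_root : F (root G) = root H.
Proof. by apply/eqP; rewrite -par_eq -pc par_root. Qed.

Lemma rp_morph z : rp (F z) = map F (rp z).
Proof.
elim/rp_ind: z => [|z nz IH] /=; first by rewrite F_root !rp_root /= F_root.
by rewrite (rp_par (nr nz)) (rp_par nz) map_rcons -pc IH.
Qed.

Lemma depth_morph z : depth (F z) = depth z.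
Proof. by rewrite /depth rp_morph size_map. Qed.

Lemma rp_morph_mem x y : x \in rp y -> F x \in rp (F y).
Proof. by move=> H1; rewrite rp_morph map_f. Qed.

Lemma epi_of : (forall w, exists v, F v = w) -> epimorphism F.
Proof.
move=> su; split => //.
- by move=> x y; rewrite !adjE => /or3P[] /eqP <-; rewrite ?pc eqxx /= ?orbT.
- move=> a b; rewrite adjE => /or3P[] /eqP <-.
  + by case: (su a) => x <-; exists x, x; rewrite adj_refl.
  + by case: (su a) => x <-; exists x, (par x); rewrite adj_par pc.
  + by case: (su b) => x <-; exists (par x), x; rewrite adj_parl pc.
- exact: F_root.
- by move=> x y /tleE H1; apply/tleE; exact: rp_morph_mem.
Qed.

Lemma light_of : light F.
Proof.
have key : forall x y : G, par x = y -> x != y -> F x = F y -> False.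
  move=> x y E nxy Fxy.
  have nx : x != root G by apply: contraNneq nxy => xr; rewrite -E xr par_root.
  have := depth_morph x; rewrite Fxy -E depth_morph (depth_par nx).
  by move=> /n_Sn.
move=> x y nxy Fxy; rewrite adjE; apply/negP => /or3P[/eqP E|/eqP E|/eqP E].
- by apply: nxy.
- by apply: (key x y E _ Fxy); apply/eqP.
- by apply: (key y x E _ (esym Fxy)); apply/eqP => E'; apply: nxy.
Qed.

Hypothesis cs : forall x b, b != root H -> par b = F x ->
  exists y, [/\ y != root G, par y = x & F y = b].

Lemma image_desc c : F @: desc c = desc (F c).
Proof.
apply/setP => h; apply/imsetP/idP.
  by case=> y yd ->; rewrite !inE in yd *; exact: rp_morph_mem.
elim/rp_ind: h => [|h nh IH] /=.
  rewrite inE rp_root inE => /eqP E.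
  have cr : c = root G by apply/eqP/negPn/negP => /nr; rewrite E eqxx.
  by exists (root G); rewrite ?cr ?desc_self ?F_root.
case: (eqVneq h (F c)) => [->|nhc] hd; first by exists c; rewrite ?desc_self.
have [nh' pd] := desc_par hd nhc.
case: (IH pd) => w wd Ew.
case: (cs nh Ew) => y [ny py Fy].
by exists y => //; apply: (desc_child ny); rewrite py.
Qed.

End Morph.

Section Conv.
Variables (G H : rtree) (f : G -> H).
Hypothesis epi : epimorphism f.
Hypothesis lf : light f.

Lemma pc_of x : f (par x) = par (f x).
Proof.
have [eadj _ _ froot etle] := epi.
case: (eqVneq x (root G)) => [->|nx]; first by rewrite par_root froot par_root.
have a : adj (f (par x)) (f x) by apply: eadj; exact: adj_parl.
have nab : f (par x) != f x.
  apply/eqP => E; have := lf (elimN eqP (par_neq nx)) E; by rewrite adj_parl.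
have t : f (par x) \in rp (f x).
  by apply/tleE; apply: etle; apply/tleE; rewrite mem_rp_par nx mem_rp orbT.
case/adjP: a => [E|E|E //].
- by rewrite E eqxx in nab.
- exfalso; have nfx : f (par x) != root H.
    apply/eqP => E'; rewrite E' par_root in E; by rewrite -E E' eqxx in nab.
  have t' : f x \in rp (f (par x)) by rewrite -E mem_rp_par nfx mem_rp orbT.
  have [d1 _] := depth_rp t; have [d2 _] := depth_rp t'.
  have := rp_depth_eq t; rewrite (eqP (_ : depth (f (par x)) == depth (f x))).
    by move=> /(_ erefl) E'; rewrite E' eqxx in nab.
  by rewrite eqn_leq d1 d2.
Qed.

Lemma nr_of x : x != root G -> f x != root H.
Proof.
move=> nx; apply/eqP => E.
have := lf (elimN eqP (par_neq nx)); rewrite pc_of E par_root => /(_ erefl).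
by rewrite adj_parl.
Qed.

Hypothesis cf : confluent f.

Lemma cs_of x b : b != root H -> par b = f x ->
  exists y, [/\ y != root G, par y = x & f y = b].
Proof.
move=> nb pb.
have dfx : depth b = (depth (f x)).+1 by rewrite (depth_par nb) pb.
have dm := depth_morph pc_of nr_of.
set Q := f x |: desc b.
have cQ : connected Q.
  apply: (@conn_top _ (f x)); first by rewrite in_setU1 eqxx.
  move=> s; rewrite in_setU1 => /orP[->//|sd] ns; split; first exact: desc_root_n nb sd.
  case: (eqVneq s b) => [->|nsb]; first by rewrite pb in_setU1 eqxx.
  by have [_] := desc_par sd nsb; rewrite in_setU1 => ->; rewrite orbT.
set S := [set z | (x \in rp z) && (f z \in Q)].
have xS : x \in S by rewrite !inE mem_rp !eqxx.
have Spar : forall s, s \in S -> s != x -> (s != root G) /\ (par s \in S).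
  move=> s; rewrite inE => /andP[xs fsQ] nsx.
  move: xs; rewrite mem_rp_par eq_sym (negbTE nsx) /= => /andP[ns xps]; split => //.
  rewrite inE xps /=.
  have fsd : f s \in desc b.
    move: fsQ; rewrite in_setU1 => /orP[/eqP E|//].
    have E' : depth x = depth s by rewrite -(dm s) E dm.
    by have [d _] := depth_rp xps; move: d; rewrite E' (depth_par ns) ltnn.
  rewrite pc_of in_setU1; case: (eqVneq (f s) b) => [->|nsb]; first by rewrite pb eqxx.
  by have [_] := desc_par fsd nsb; rewrite orbC => ->.
have compS : component (f @^-1: Q) S.
  apply: (comp_closed xS).
  - by apply/subsetP => z; rewrite !inE => /andP[_ ->].
  - by apply: (conn_top xS) => s sS nsx; exact: Spar.
  move=> s w sS; rewrite inE => wQ /adjP [<- //|E|E].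
    case: (eqVneq s x) => [Esx|nsx]; last by rewrite -E; have [] := Spar s sS nsx.
    case: (eqVneq x (root G)) => [xr|nx].
      by rewrite -E Esx xr par_root -xr.
    exfalso; move: wQ; rewrite -E Esx pc_of !inE => /orP[/eqP E'|wd].
      by move: (par_neq (nr_of nx)); rewrite E' eqxx.
    have [d _] := depth_rp (wd : b \in rp (par (f x))).
    by move: d; rewrite dfx (depth_par (nr_of nx)) => /(leq_trans (leqnSn _)); rewrite ltnn.
  case: (eqVneq w (root G)) => [wr|nw].
    by rewrite wr; move: E; rewrite wr par_root => ->.
  rewrite inE wQ andbT; move: sS; rewrite inE => /andP[xs _].
  by rewrite (mem_rp_par x w) nw E xs orbT.
have := cf cQ compS.
have bQ : b \in Q by rewrite !inE mem_rp orbT.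
move=> E; rewrite -E in bQ; case/imsetP: bQ => z zS bz.
move: zS; rewrite inE => /andP[xz _].
have dz : depth z = (depth x).+1 by rewrite -dm -bz dfx dm.
have nz : z != root G by rewrite -depth0 dz.
exists z; split => //.
apply/esym/(rp_depth_eq); last by move: dz; rewrite (depth_par nz) => -[].
move: xz; rewrite (mem_rp_par x z) nz /= => /orP[/eqP E'|//].
by move: dz; rewrite E' => /n_Sn.
Qed.

End Conv.

Lemma elem_of (G H : rtree) (F : G -> H) (c1 c2 : G) (u : H) :
  epimorphism F -> c1 != c2 -> c1 != root G -> c2 != root G -> par c1 = par c2 ->
  {in desc c1 &, injective F} -> {in desc c2 &, injective F} ->
  u != root H -> F @: desc c1 = desc u -> F @: desc c2 = desc u -> par u = F (par c1) ->
  {in ~: (desc c1 :|: desc c2) &, injective F} -> elementary_lc F.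
Proof.
move=> epi n12 n1 n2 p12 i1 i2 nu e1 e2 pu ic; split => //.
exists (par c1), (desc c1), (desc c2).
split; first exact: desc_comp.
split; first by rewrite p12; exact: desc_comp.
split.
  move=> E; have := desc_self c1; rewrite E.
  by move/negP: (desc_disj n12 (depth_sib n1 n2 p12) (desc_self c1)).
do 3!split => //; first by rewrite e1 e2.
split => //; rewrite e1 -pu; exact: desc_comp.
Qed.

Section Sib.
Variables (G H : rtree) (F : G -> H).
Hypothesis pc : forall x, F (par x) = par (F x).
Hypothesis nr : forall x, x != root G -> F x != root H.

Lemma sib_in c a b : a \in desc c -> b \in desc c -> a != b -> F a = F b ->
  exists a' b', [/\ a' \in desc c, a' != c, a' != b', F a' = F b' & par a' = par b'].
Proof.
move: {2}(depth a) (erefl (depth a)) => n; elim: n a b => [|n IH] a b Da ad bd nab Fab.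
  have Db : depth b = depth a by rewrite -(depth_morph pc nr b) -Fab depth_morph.
  move: Da; move/eqP; rewrite depth0 => /eqP ar.
  move/eqP: Db; rewrite ar depth_root depth0 => /eqP br.
  by rewrite ar br eqxx in nab.
have Db : depth b = depth a by rewrite -(depth_morph pc nr b) -Fab depth_morph.
have nac : a != c.
  apply/eqP => E; move: bd; rewrite inE => /rp_depth_eq; rewrite Db -E => /(_ erefl) E'.
  by rewrite E' eqxx in nab.
have nbc : b != c.
  apply/eqP => E; move: ad; rewrite inE => /rp_depth_eq; rewrite -Db -E => /(_ erefl) E'.
  by rewrite E' eqxx in nab.
have [na pa] := desc_par ad nac.
have [nb pb] := desc_par bd nbc.
case: (eqVneq (par a) (par b)) => [E|nE]; first by exists a, b.
apply: (IH (par a) (par b)) => //.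
  by move: Da; rewrite (depth_par na) => -[].
by rewrite !pc Fab.
Qed.

End Sib.

Section Fold.
Variables (G H : rtree) (F : G -> H) (c1 c2 : G).
Hypothesis pc : forall x, F (par x) = par (F x).
Hypothesis nr : forall x, x != root G -> F x != root H.
Hypothesis su : forall w, exists v, F v = w.
Hypothesis cs : forall x b, b != root H -> par b = F x ->
  exists y, [/\ y != root G, par y = x & F y = b].
Hypothesis n12 : c1 != c2.
Hypothesis n1 : c1 != root G.
Hypothesis n2 : c2 != root G.
Hypothesis p12 : par c1 = par c2.
Hypothesis F12 : F c1 = F c2.
Hypothesis i1 : {in desc c1 &, injective F}.
Hypothesis i2 : {in desc c2 &, injective F}.

Local Notation D2 := (desc c2).

Lemma root_nD2 : root G \notin D2.
Proof. by apply/negP => /(desc_root_n n2); rewrite eqxx. Qed.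

Lemma d1_nD2 x : x \in desc c1 -> x \notin D2.
Proof. exact: desc_disj n12 (depth_sib n1 n2 p12). Qed.

Lemma entry a b : a \notin D2 -> b \in D2 -> adj a b -> a = par c2.
Proof.
move=> aD bD /adjP [E|E|E].
- by rewrite E bD in aD.
- case: (eqVneq a (root G)) => [ar|na].
    by move: bD; rewrite -E ar par_root (negbTE root_nD2).
  by move: aD; rewrite (desc_child na) // E.
- case: (eqVneq b c2) => [bc|nbc]; first by rewrite -E bc.
  by have [_] := desc_par bD nbc; rewrite E (negbTE aD).
Qed.

Lemma exit_v p z : z \in D2 -> path (@adj G) z p -> last z p \notin D2 -> par c2 \in p.
Proof.
elim: p z => [|w p IH] z /=; first by move=> ->.
move=> zD /andP[azw pw] lw; case: (boolP (w \in D2)) => wD.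
  by rewrite inE (IH w wD pw lw) orbT.
by rewrite inE (entry wD zD) ?eqxx // adj_sym.
Qed.

Lemma avoid p a : a \notin D2 -> path (@adj G) a p -> uniq (a :: p) -> last a p \notin D2 ->
  all (fun x => x \notin D2) p.
Proof.
elim: p a => [|z p IH] a //= aD /andP[az pz] /andP[anp up] lz.
case: (boolP (z \in D2)) => zD /=.
  exfalso; have Ea := entry aD zD az; have := exit_v zD pz lz.
  by move: anp; rewrite inE negb_or Ea => /andP[_ /negP].
exact: (IH z zD pz up lz).
Qed.

Definition Kt := {x : G | x \notin desc c2}.
Definition Kadj : rel Kt := fun a b => adj (val a) (val b).
Definition Kroot : Kt := exist _ (root G) root_nD2.

Lemma Krefl x : Kadj x x.
Proof. exact: adj_refl. Qed.
Lemma Ksym x y : Kadj x y = Kadj y x.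
Proof. exact: adj_sym. Qed.

Lemma gpK (x y : Kt) q : is_gpath Kadj x y (x :: q) <->
  is_gpath (@adj G) (val x) (val y) (val x :: map val q).
Proof.
split.
  case=> p [[<-] [pa [la un]]]; exists (map val q); split => //; split.
    by rewrite path_map.
  split; first by rewrite last_map la.
  by rewrite -map_cons map_inj_uniq //; exact: val_inj.
case=> p [[<-] [pa [la un]]]; exists q; split => //; split.
  by rewrite path_map in pa.
split; first by apply: val_inj; rewrite -last_map.
by rewrite -(map_inj_uniq val_inj).
Qed.

Lemma lift_map p : all (fun x => x \notin D2) p -> map val (pmap (insub : G -> option Kt) p) = p.
Proof.
elim: p => [|z p IH] //= /andP[zD aD].
by rewrite insubT /= IH.
Qed.

Lemma Ktree (x y : Kt) : x <> y ->
  (exists s, is_gpath Kadj x y s) /\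
  (forall s1 s2, is_gpath Kadj x y s1 -> is_gpath Kadj x y s2 -> s1 = s2).
Proof.
move=> nxy; have nv : val x <> val y by move/val_inj.
have [[s Hs] U] := tree_ax nv.
split.
  case: Hs => p [Es [pa [la un]]].
  have al : all (fun x => x \notin D2) p.
    apply: (avoid (valP x) pa); first by rewrite -Es.
    by rewrite la (valP y).
  exists (x :: pmap insub p); apply/gpK; rewrite lift_map //.
  by exists p; rewrite -Es.
move=> s1 s2 H1 H2.
have [q1 [E1 _]] := H1; have [q2 [E2 _]] := H2.
rewrite E1 in H1; rewrite E2 in H2.
move/gpK: H1 => H1; move/gpK: H2 => H2.
have := U _ _ H1 H2; rewrite E1 E2 => [[]] /(inj_map val_inj) ->.
by [].
Qed.

Definition K : rtree := @RTree Kt Kadj Kroot Krefl Ksym Ktree.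

Lemma rpK (y : K) : map val (rp y) = rp (val y).
Proof.
have /gpP := rpP y; case: (rp_head y) => q E.
rewrite E => /gpK Hg; apply/esym/rpE; apply/gpP; exact: Hg.
Qed.

Lemma K_nr (y : K) : y != root K -> val y != root G.
Proof. by apply: contra => /eqP E; apply/eqP/val_inj. Qed.

Lemma val_par (y : K) : val (par y) = par (val y).
Proof.
case: (eqVneq y (root K)) => [->|ny]; first by rewrite !par_root.
have := rpK y; rewrite (rp_par ny) (rp_par (K_nr ny)) map_rcons rpK.
by move/eqP; rewrite eqseq_rcons eqxx andbT => /eqP /rp_inj.
Qed.

Definition phi (x : G) : G := odflt x [pick w in desc c1 | F w == F x].

Lemma phiP x : x \in D2 -> phi x \in desc c1 /\ F (phi x) = F x.
Proof.
move=> xD.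
have : F x \in F @: desc c1 by rewrite (image_desc pc nr cs) F12 -(image_desc pc nr cs) imset_f.
case/imsetP => w wd Fw.
rewrite /phi; case: pickP => [w' /andP[w'd /eqP Fw'] | none] //=.
by have := none w; rewrite wd Fw eqxx.
Qed.

Lemma phi_c2 : phi c2 = c1.
Proof.
have [pd pF] := phiP (desc_self c2).
by apply: i1 => //; [exact: desc_self | rewrite pF F12].
Qed.

Definition e' (x : G) : G := if x \in D2 then phi x else x.

Lemma e'_nD x : e' x \notin D2.
Proof. rewrite /e'; case: ifP => xD; last by rewrite xD. have [pd _] := phiP xD; exact: d1_nD2. Qed.

Lemma e'F x : F (e' x) = F x.
Proof. by rewrite /e'; case: ifP => // xD; have [_ ->] := phiP xD. Qed.

Lemma e'_id x : x \notin D2 -> e' x = x.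
Proof. by rewrite /e' => /negbTE ->. Qed.

Lemma e'_par x : e' (par x) = par (e' x).
Proof.
case: (boolP (x \in D2)) => xD; last first.
  rewrite !e'_id //; apply: contra xD => pD.
  case: (eqVneq x (root G)) => [xr|nx]; first by rewrite xr par_root in pD; rewrite xr pD.
  exact: desc_child.
case: (eqVneq x c2) => [->|nxc].
  by rewrite /e' (negbTE (par_desc_n n2)) desc_self phi_c2 p12.
have [nx pD] := desc_par xD nxc.
rewrite /e' xD pD.
have [pd pF] := phiP xD; have [ppd ppF] := phiP pD.
have nphi : phi x != c1.
  apply/eqP => E; move/eqP: nxc; apply; apply: i2 => //; first exact: desc_self.
  by rewrite -pF E F12.
have [nphr ppd'] := desc_par pd nphi.
apply: i1 => //; by rewrite ppF pc pc pF.
Qed.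

Lemma e'_nr x : x != root G -> e' x != root G.
Proof.
move=> nx; rewrite /e'; case: ifP => // xD.
have [pd _] := phiP xD; exact: desc_root_n n1 pd.
Qed.

Definition e (x : G) : K := exist _ (e' x) (e'_nD x).
Definition g (y : K) : H := F (val y).

Lemma e_pc x : e (par x) = par (e x).
Proof. by apply: val_inj; rewrite val_par /= e'_par. Qed.

Lemma e_nr x : x != root G -> e x != root K.
Proof. move=> nx; apply/eqP => E; have := e'_nr nx; by rewrite -[e' x]/(val (e x)) E eqxx. Qed.

Lemma e_su (y : K) : e (val y) = y.
Proof. by apply: val_inj; rewrite /= e'_id // (valP y). Qed.

Lemma e_epi : epimorphism e.
Proof. apply: epi_of; [exact: e_pc | exact: e_nr | move=> y; exists (val y); exact: e_su]. Qed.

Lemma ge x : F x = g (e x).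
Proof. by rewrite /g /= e'F. Qed.

Lemma g_pc y : g (par y) = par (g y).
Proof. by rewrite /g val_par pc. Qed.

Lemma g_nr y : y != root K -> g y != root H.
Proof. by move=> ny; apply: nr; apply: K_nr. Qed.

Lemma g_su w : exists y, g y = w.
Proof. by case: (su w) => v <-; exists (e v); rewrite -ge. Qed.

Lemma g_cs (y : K) b : b != root H -> par b = g y ->
  exists z, [/\ z != root K, par z = y & g z = b].
Proof.
move=> nb pb; case: (cs nb pb) => z [nz pz Fz].
case: (boolP (z \in D2)) => zD; last first.
  exists (exist _ z zD); split => //.
  by apply: val_inj; rewrite val_par /= pz.
have zc : z = c2.
  apply/eqP/negPn/negP => nzc; have [_ pD] := desc_par zD nzc.
  by move: (valP y); rewrite -pz pD.
exists (exist _ c1 (d1_nD2 (desc_self c1))); split.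
- apply/negP => /eqP E; move/eqP: n1; apply.
  by rewrite -[c1]/(val (exist (fun x => x \notin D2) c1 (d1_nD2 (desc_self c1)))) E.
- by apply: val_inj; rewrite val_par /= p12 -pz zc.
- by rewrite /g /= F12 -Fz zc.
Qed.

Lemma card_K : #|K| < #|G|.
Proof.
rewrite [#|K|]card_sig.
have : #|[pred x : G | x \notin D2]| + #|[pred x : G | x \in D2]| = #|G|.
  by rewrite addnC cardC.
move=> <-; rewrite -[X in X < _]addn0 ltn_add2l.
by apply/card_gt0P; exists c2; rewrite !inE mem_rp.
Qed.

Lemma e_inj_out x y : x \notin D2 -> y \notin D2 -> e x = e y -> x = y.
Proof. by move=> xD yD /(f_equal val) /=; rewrite !e'_id. Qed.

Lemma descK (y : K) : (y \in desc (e c1)) = (val y \in desc c1).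
Proof.
rewrite !inE -rpK.
have E : val (e c1) = c1 by rewrite /= e'_id // d1_nD2 // desc_self.
by rewrite -{2}E (mem_map val_inj).
Qed.

Lemma e_elem : elementary_lc e.
Proof.
have c1D := d1_nD2 (desc_self c1).
apply: (@elem_of _ _ e c1 c2 (e c1)) => //.
- exact: e_epi.
- by move=> x y xd yd; apply: e_inj_out; exact: d1_nD2.
- move=> x y xd yd /(f_equal val) /=; rewrite /e' xd yd => E.
  by apply: i2 => //; have [_ <-] := phiP xd; have [_ <-] := phiP yd; rewrite E.
- by apply: e_nr.
- apply/setP => y; rewrite descK; apply/imsetP/idP.
    by case=> x xd ->; rewrite /= e'_id // d1_nD2.
  by move=> yd; exists (val y) => //; rewrite e_su.
- apply/setP => y; rewrite descK; apply/imsetP/idP.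
    by case=> x xd ->; rewrite /= /e' xd; have [] := phiP xd.
  move=> yd.
  have : F (val y) \in F @: D2 by rewrite (image_desc pc nr cs) -F12 -(image_desc pc nr cs) imset_f.
  case/imsetP => x xd Fx; exists x => //; apply: val_inj; rewrite /= /e' xd.
  have [pd pF] := phiP xd; apply: i1 => //; by rewrite pF Fx.
- by rewrite e_pc.
- move=> a b; rewrite !in_setC !in_setU !negb_or => /andP[_ aD] /andP[_ bD].
  exact: e_inj_out.
Qed.

Lemma F_elem : bijective g -> elementary_lc F.
Proof.
move=> [gi gK1 gK2].
have gin : injective g by exact: can_inj gK1.
apply: (@elem_of _ _ F c1 c2 (F c1)) => //.
- by apply: epi_of => //.
- exact: nr.
- exact: image_desc.
- by rewrite F12; exact: image_desc.
- move=> a b; rewrite !in_setC !in_setU !negb_or => /andP[_ aD] /andP[_ bD].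
  rewrite !ge => /gin; exact: e_inj_out.
Qed.

End Fold.

Definition good (G H : rtree) (F : G -> H) :=
  [/\ (forall x, F (par x) = par (F x)), (forall x, x != root G -> F x != root H),
      (forall w, exists v, F v = w) &
      (forall x b, b != root H -> par b = F x -> exists y, [/\ y != root G, par y = x & F y = b])].

Lemma inj_surj_bij (G H : rtree) (F : G -> H) :
  injective F -> (forall w, exists v, F v = w) -> bijective F.
Proof.
move=> inj su.
pose Fi (w : H) : G := odflt (root G) [pick v | F v == w].
have FiK w : F (Fi w) = w.
  rewrite /Fi; case: pickP => [v /eqP //|none].
  by case: (su w) => v Ev; have := none v; rewrite Ev eqxx.
by exists Fi => // x; apply: inj; rewrite FiK.
Qed.

Lemma main n : forall (G H : rtree) (F : G -> H), #|G| < n -> good F -> bijective F \/ elem_comp F.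
Proof.
elim: n => [|n IH] G H F cG [pc nr su cs]; first by [].
case: (boolP [forall x, forall y, (F x == F y) ==> (x == y)]) => Hinj.
  left; apply: inj_surj_bij => // x y Fxy.
  by move/forallP: Hinj => /(_ x) /forallP /(_ y); rewrite Fxy eqxx => /eqP.
right.
move/forallPn: Hinj => [x /forallPn [y]]; rewrite negb_imply => /andP[/eqP Fxy nxy].
have xd : x \in desc (root G) by rewrite inE root_rp.
have yd : y \in desc (root G) by rewrite inE root_rp.
have [a0 [b0 [a0d a0r nab0 Fab0 pab0]]] := sib_in pc nr xd yd nxy Fxy.
pose P := fun p : G * G => [&& p.1 != root G, p.1 != p.2, F p.1 == F p.2 & par p.1 == par p.2].
have P0 : P (a0, b0) by rewrite /P /= a0r nab0 Fab0 pab0 !eqxx.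
case: (@arg_maxnP _ (a0, b0) P (fun p => depth p.1) P0) => [[c1 c2]] /=.
rewrite /P /= => /and4P[n1 n12 /eqP F12 /eqP p12] Hmax.
have n2 : c2 != root G.
  apply/eqP => c2r; move/eqP: n1; apply; apply/eqP/negPn/negP => /nr.
  by rewrite F12 c2r (F_root pc) eqxx.
have D12 := depth_sib n1 n2 p12.
have injc : forall c, depth c = depth c1 -> c != root G -> {in desc c &, injective F}.
  move=> c Dc nc a b ad bd Fab; apply/eqP/negPn/negP => nab.
  have [a' [b' [a'd a'c nab' Fab' pab']]] := sib_in pc nr ad bd nab Fab.
  have := Hmax (a', b'); rewrite /P /= (desc_root_n nc a'd) nab' Fab' pab' !eqxx => /(_ isT).
  have a'r : c \in rp a' by move: a'd; rewrite inE.
  have [dle dE] := depth_rp a'r.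
  have lt' : depth c < depth a' by rewrite ltn_neqAle dle andbT dE eq_sym a'c.
  by move=> H'; move: lt'; rewrite Dc ltnNge H'.
have i1 := injc c1 erefl n1.
have i2 := injc c2 (esym D12) n2.
have cK : #|K n2| < n.
  by rewrite -ltnS; apply: leq_trans cG; apply: card_K.
have gg : good (g F (n2:=n2)).
  split.
  - move=> z; exact: (@g_pc _ _ _ _ pc n2 z).
  - move=> z; exact: (@g_nr _ _ _ _ nr n2 z).
  - exact: (g_su pc nr su cs n12 n1 n2 p12 F12).
  - move=> z b; exact: (g_cs cs n12 n1 p12 F12).
case: (IH _ _ _ cK gg) => [bij|ec].
  by apply: ec_one; apply: (F_elem pc nr su cs n12 n1 p12 F12 i1 i2 bij).
apply: (ec_step (e_elem pc nr cs n12 n1 n2 p12 F12 i1 i2) ec).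
exact: (ge pc nr cs n12 n1 n2 p12 F12).
Qed.

Theorem corollary8p15 (G H : rtree) (f : G -> H) :
  epimorphism f -> light f -> confluent f ->
  (bijective f \/ elem_comp f).
Proof.
move=> epi lf cf.
apply: (@main #|G|.+1) => //.
split.
- exact: pc_of.
- exact: nr_of.
- by case: epi.
- exact: cs_of.
Qed.
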